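(* Let $\pi:\Delta\to\mathbb F[\overline A,\overline B,\overline C]$ be the $\mathbb F$-algebra homomorphism sending $A\mapsto\overline A$, $B\mapsto\overline B$, $C\mapsto\overline C$. Then (i) $\langle A,B\rangle$ is the preimage under $\pi$ of the subalgebra $\mathbb F[\overline A,\overline B]$; (ii) $\langle B,C\rangle$ is the preimage of $\mathbb F[\overline B,\overline C]$; (iii) $\langle A,C\rangle$ is the preimage of $\mathbb F[\overline A,\overline C]$.
   Context: Let $\mathbb F$ be a field and fix a nonzero $q\in\mathbb F$ with $q^4\neq 1$. The universal Askey--Wilson algebra $\Delta$ is the associative $\mathbb F$-algebra with 1 with generators $A,B,C$ subject to the relations that each of $A+\frac{qBC-q^{-1}CB}{q^2-q^{-2}}$, $B+\frac{qCA-q^{-1}AC}{q^2-q^{-2}}$, $C+\frac{qAB-q^{-1}BA}{q^2-q^{-2}}$ is central. $\overline A,\overline B,\overline C$ are mutually commuting indeterminates, $\mathbb F[\overline A,\overline B]$ etc. denote the subalgebras of $\mathbb F[\overline A,\overline B,\overline C]$ generated by the indicated variables. For a subset $\mathcal S\subseteq\Delta$, $\langle\mathcal S\rangle$ denotes the $\mathbb F$-subalgebra of $\Delta$ generated by $\mathcal S$. *)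

(* Defs.v *)
From HB Require Import structures.
From mathcomp Require Import all_boot all_order all_algebra.
From mathcomp Require Import mpoly.
Set Implicit Arguments. Unset Strict Implicit. Unset Printing Implicit Defensive.
Import GRing.Theory.
Local Open Scope ring_scope.

Definition central (F : fieldType) (R : algType F) (x : R) : Prop :=
  forall y : R, x * y = y * x.

Definition AW_rel (F : fieldType) (q : F) (R : algType F) (a b c : R) : Prop :=
  let k := (q ^+ 2 - q ^- 2)^-1 in
  [/\ central (a + k *: (q *: (b * c) - q^-1 *: (c * b))),
      central (b + k *: (q *: (c * a) - q^-1 *: (a * c))) &
      central (c + k *: (q *: (a * b) - q^-1 *: (b * a)))].

Definition alg_hom (F : fieldType) (R S : algType F) (f : R -> S) : Prop :=
  [/\ forall x y, f (x + y) = f x + f y,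
      forall (a : F) x, f (a *: x) = a *: f x,
      forall x y, f (x * y) = f x * f y &
      f 1 = 1].

Definition is_universal_AW (F : fieldType) (q : F) (D : algType F)
  (A B C : D) : Prop :=
  AW_rel q A B C /\
  forall (R : algType F) (a b c : R), AW_rel q a b c ->
    (exists f : D -> R, [/\ alg_hom f, f A = a, f B = b & f C = c]) /\
    (forall f g : D -> R, alg_hom f -> alg_hom g ->
       f A = g A -> f B = g B -> f C = g C -> forall x, f x = g x).

Definition subalg_closedP (F : fieldType) (R : algType F) (P : R -> Prop) : Prop :=
  [/\ P 1, (forall x y, P x -> P y -> P (x + y)),
      (forall x y, P x -> P y -> P (x * y)) &
      (forall (a : F) x, P x -> P (a *: x))].

Definition gen_subalg (F : fieldType) (R : algType F) (S : R -> Prop) (x : R) : Prop :=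
  forall P : R -> Prop, subalg_closedP P -> (forall s, S s -> P s) -> P x.

(* Main.v *)
Require Import Defs.
From HB Require Import structures.
From mathcomp Require Import all_boot all_order all_algebra.
From mathcomp Require Import mpoly.
From mathcomp Require Import generic_quotient ring_quotient.
From Stdlib Require Import ClassicalEpsilon.
Set Implicit Arguments. Unset Strict Implicit. Unset Printing Implicit Defensive.
Import GRing.Theory.
Local Open Scope ring_scope.
Local Open Scope quotient_scope.

Definition pb (P : Prop) : bool := if excluded_middle_informative P then true else false.
Lemma pbP (P : Prop) : reflect P (pb P).
Proof. by rewrite /pb; case: excluded_middle_informative => h; constructor. Qed.



Section Homs.
Variables (F : fieldType).

Lemma hom_opp (R S : algType F) (g : R -> S) : alg_hom g -> forall x, g (- x) = - g x.
Proof.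
case=> hD hZ _ _ x.
by rewrite -scaleN1r hZ scaleN1r.
Qed.

Lemma hom_sub (R S : algType F) (g : R -> S) : alg_hom g -> forall x y, g (x - y) = g x - g y.
Proof. move=> hg x y; case: (hg) => hD _ _ _; by rewrite hD (hom_opp hg). Qed.

Lemma alg_hom_id (R : algType F) : alg_hom (@id R).
Proof. by split. Qed.

Lemma alg_hom_comp (R S T : algType F) (g : R -> S) (h : S -> T) :
  alg_hom g -> alg_hom h -> alg_hom (h \o g).
Proof.
case=> g1 g2 g3 g4 [h1 h2 h3 h4]; split=> /=.
- by move=> x y; rewrite g1 h1.
- by move=> a x; rewrite g2 h2.
- by move=> x y; rewrite g3 h3.
- by rewrite g4 h4.
Qed.

Lemma AW_rel_inj (q : F) (R S : algType F) (g : R -> S) (a b c : R) :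
  alg_hom g -> injective g -> AW_rel q (g a) (g b) (g c) -> AW_rel q a b c.
Proof.
move=> hg ig; have [h1 h2 h3 h4] := hg.
have hs := hom_sub hg.
rewrite /AW_rel /central /=; case=> c1 c2 c3; split=> y; apply: ig; rewrite !(h3, h1, h2, hom_opp hg).
- exact: c1.
- exact: c2.
- exact: c3.
Qed.

Lemma gen_closed (R : algType F) (S : R -> Prop) : subalg_closedP (gen_subalg S).
Proof.
split.
- by move=> P [] .
- by move=> x y hx hy P hP hS; case: (hP) => _ hD _ _; apply: hD; [apply: hx|apply: hy].
- by move=> x y hx hy P hP hS; case: (hP) => _ _ hM _; apply: hM; [apply: hx|apply: hy].
- by move=> a x hx P hP hS; case: (hP) => _ _ _ hZ; apply: hZ; apply: hx.
Qed.

Lemma gen_base (R : algType F) (S : R -> Prop) s : S s -> gen_subalg S s.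
Proof. by move=> hs P _ hS; apply: hS. Qed.

Lemma gen_mono (R : algType F) (S S' : R -> Prop) : (forall s, S s -> S' s) ->
  forall x, gen_subalg S x -> gen_subalg S' x.
Proof.
move=> hSS x hx; apply: hx; first exact: gen_closed.
by move=> s hs; apply: gen_base; apply: hSS.
Qed.

Lemma hom_gen (R T : algType F) (g : R -> T) (S : R -> Prop) (S' : T -> Prop) :
  alg_hom g -> (forall s, S s -> gen_subalg S' (g s)) ->
  forall x, gen_subalg S x -> gen_subalg S' (g x).
Proof.
move=> [g1 g2 g3 g4] hS x hx; apply: hx (hS).
have [c1 c2 c3 c4] := gen_closed S'.
split.
- by rewrite g4.
- by move=> x' y' hx' hy'; rewrite g1; apply: c2.
- by move=> x' y' hx' hy'; rewrite g3; apply: c3.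
- by move=> a x' hx'; rewrite g2; apply: c4.
Qed.

End Homs.
Section Gen.
Variables (F : fieldType) (D : algType F) (P : D -> Prop) (hP : subalg_closedP P).
Definition Pp : {pred D} := fun x => pb (P x).
Lemma Pp_closed : GRing.subsemialg_closed Pp.
Proof.
case: hP => h1 hD hM hZ.
have h0 : P 0 by rewrite -(scale0r 1); apply: hZ.
split; rewrite /Pp.
- by apply/pbP.
- by split; [apply/pbP | move=> x y /pbP hx /pbP hy; apply/pbP; apply: hD].
- by move=> s x /pbP hx; apply/pbP; apply: hZ.
- by move=> x y /pbP hx /pbP hy; apply/pbP; apply: hM.
Qed.
HB.instance Definition _ := GRing.isSubalgClosed.Build F D Pp Pp_closed.
Record subT := SubT { sv : D; _ : sv \in Pp }.
HB.instance Definition _ := [isSub for sv].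
HB.instance Definition _ := [Choice of subT by <:].
HB.instance Definition _ := [SubChoice_isSubAlgebra of subT by <:].
Lemma sub_gen (q : F) (A B C : D) (hrel : AW_rel q A B C)
  (huniv : forall (R : algType F) (a b c : R), AW_rel q a b c ->
    (exists f : D -> R, [/\ alg_hom f, f A = a, f B = b & f C = c]) /\
    (forall f g : D -> R, alg_hom f -> alg_hom g ->
       f A = g A -> f B = g B -> f C = g C -> forall x, f x = g x))
  (hS : forall s, s = A \/ s = B \/ s = C -> P s) : forall x, P x.
Proof.
move=> x.
have PA : A \in Pp by apply/pbP; apply: hS; left.
have PB : B \in Pp by apply/pbP; apply: hS; right; left.
have PC : C \in Pp by apply/pbP; apply: hS; right; right.
pose A' : subT := SubT PA.
pose B' : subT := SubT PB.
pose C' : subT := SubT PC.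
have hv : alg_hom (@sv : subT -> D).
  split.
  - by move=> u v; rewrite -[sv _]/(val _) rmorphD.
  - by move=> a u; rewrite -[sv _]/(val _) linearZ.
  - by move=> u v; rewrite -[sv _]/(val _) rmorphM.
  - by rewrite -[sv _]/(val _) rmorph1.
have rel' : AW_rel q A' B' C'.
  exact: (@AW_rel_inj _ q _ _ _ A' B' C' hv val_inj hrel).
have [[f [hf fA fB fC]] _] := huniv _ _ _ _ rel'.
have [_ uniq] := huniv _ _ _ _ hrel.
have e := uniq _ _ (alg_hom_comp hf hv) (alg_hom_id D).
rewrite -(e _ _ _ x) /=; first by apply/pbP; case: (f x).
- by rewrite fA.
- by rewrite fB.
- by rewrite fC.
Qed.
End Gen.
Lemma universal_gen (F : fieldType) (q : F) (D : algType F) (A B C : D) :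
  is_universal_AW q A B C ->
  forall x, gen_subalg (fun y => y = A \/ y = B \/ y = C) x.
Proof.
move=> [hrel huniv] x P hP hS.
exact: (sub_gen hP hrel huniv hS).
Qed.

Section Main.
Variables (F : fieldType) (q : F) (hq1 : q - q^-1 != 0) (hk0 : q ^+ 2 - q ^- 2 != 0).
Variables (D : algType F) (a b c : D) (hrel : AW_rel q a b c).
Variable (hgen : forall x, gen_subalg (fun y => y = a \/ y = b \/ y = c) x).

Definition cm (x y : D) := x * y - y * x.
Lemma cmDl x y z : cm (x + y) z = cm x z + cm y z.
Proof. by rewrite /cm mulrDl mulrDr opprD addrACA. Qed.
Lemma cmNl x z : cm (- x) z = - cm x z.
Proof. by rewrite /cm mulNr mulrN opprB opprK addrC. Qed.
Lemma cmBl x y z : cm (x - y) z = cm x z - cm y z.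
Proof. by rewrite cmDl cmNl. Qed.
Lemma cmZl s x z : cm (s *: x) z = s *: cm x z.
Proof. by rewrite /cm -scalerAl -scalerAr scalerBr. Qed.
Lemma cmMl x y z : cm (x * y) z = x * cm y z + cm x z * y.
Proof. by rewrite /cm mulrBr mulrBl !mulrA addrA subrK. Qed.
Lemma cmMr x y z : cm z (x * y) = cm z x * y + x * cm z y.
Proof. by rewrite /cm mulrBr mulrBl !mulrA addrA subrK. Qed.
Lemma cmC x y : cm x y = - cm y x.
Proof. by rewrite /cm opprB. Qed.
Lemma cmxx x : cm x x = 0.
Proof. by rewrite /cm subrr. Qed.

Let k := (q ^+ 2 - q ^- 2)^-1.
Definition gam := c + k *: (q *: (a * b) - q^-1 *: (b * a)).
Definition bet := b + k *: (q *: (c * a) - q^-1 *: (a * c)).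
Definition w := - (k *: (q *: (a * b) - q^-1 *: (b * a))).

Lemma gam_central : central gam.
Proof. by case: hrel. Qed.
Lemma bet_central : central bet.
Proof. by case: hrel. Qed.
Lemma c_eq : c = gam + w.
Proof. by rewrite /gam /w addrK. Qed.

Lemma cm_gam x y : cm (gam * x) y = gam * cm x y.
Proof. by rewrite /cm mulrBr -mulrA (mulrA y gam x) -(gam_central y) -mulrA. Qed.
Lemma cm_gamr x y : cm (x * gam) y = gam * cm x y.
Proof. by rewrite -gam_central cm_gam. Qed.

Definition S := gen_subalg (fun y => y = a \/ y = b).
Lemma S_closed : subalg_closedP S. Proof. exact: gen_closed. Qed.
Lemma Sa : S a. Proof. by apply: gen_base; left. Qed.
Lemma Sb : S b. Proof. by apply: gen_base; right. Qed.
Lemma S1 : S 1. Proof. by case: S_closed. Qed.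
Lemma SD x y : S x -> S y -> S (x + y). Proof. by case: S_closed => _ h _ _; apply: h. Qed.
Lemma SM x y : S x -> S y -> S (x * y). Proof. by case: S_closed => _ _ h _; apply: h. Qed.
Lemma SZ s x : S x -> S (s *: x). Proof. by case: S_closed => _ _ _ h; apply: h. Qed.
Lemma SN x : S x -> S (- x). Proof. by move=> h; rewrite -scaleN1r; apply: SZ. Qed.
Lemma SB x y : S x -> S y -> S (x - y). Proof. by move=> hx hy; apply: SD => //; apply: SN. Qed.
Lemma Sw : S w.
Proof. apply: SN; apply: SZ; apply: SB; apply: SZ; apply: SM; by [exact: Sa|exact: Sb]. Qed.

Definition z0 := q *: (w * a) - q^-1 *: (a * w).
Lemma Sz0 : S z0.
Proof. apply: SB; apply: SZ; apply: SM; by [exact: Sw|exact: Sa]. Qed.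

Lemma key : (q - q^-1) *: (gam * cm a b) = - cm z0 b.
Proof.
have h : cm bet b = 0.
  by rewrite /cm bet_central subrr.
move: h; rewrite /bet cmDl cmxx add0r cmZl.
move/eqP; rewrite scaler_eq0 invr_eq0 (negbTE hk0) /= => /eqP.
rewrite cmBl !cmZl.
have e1 : c * a = gam * a + w * a by rewrite c_eq mulrDl.
have e2 : a * c = gam * a + a * w by rewrite c_eq mulrDr gam_central.
rewrite e1 e2 !cmDl !cm_gam /z0 cmNl !cmZl; move: (gam * cm a b) (cm (w * a) b) (cm (a * w) b) => G U V h.
apply/eqP; rewrite -subr_eq0 -[X in _ == X]h; apply/eqP.
by rewrite scalerBl !scalerDr opprK opprD addrACA.
Qed.

Lemma key2 : gam * cm a b = (- (q - q^-1)^-1) *: cm z0 b.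
Proof.
by rewrite scaleNr -scalerN -key scalerA mulVf // scale1r.
Qed.

Definition idealS (P : D -> Prop) :=
  [/\ (forall x y, P x -> P y -> P (x + y)), (forall s x, P x -> P (s *: x)) &
      (forall x, P x -> [/\ P (a * x), P (b * x), P (x * a) & P (x * b)])].
Definition Kc x := forall P, idealS P -> P (cm a b) -> P x.

Lemma Kc_ideal : idealS Kc.
Proof.
split.
- by move=> x y hx hy P hP h; case: (hP) => hD _ _; apply: hD; [apply: hx|apply: hy].
- by move=> s x hx P hP h; case: (hP) => _ hZ _; apply: hZ; apply: hx.
- move=> x hx; split=> P hP h; case: (hP) => _ _ hM; have [? ? ? ?] := hM x (hx P hP h); done.
Qed.
Lemma Kcab : Kc (cm a b). Proof. by move=> P _ h. Qed.
Lemma KcD x y : Kc x -> Kc y -> Kc (x + y). Proof. by case: Kc_ideal => h _ _; apply: h. Qed.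
Lemma KcZ s x : Kc x -> Kc (s *: x). Proof. by case: Kc_ideal => _ h _; apply: h. Qed.
Lemma Kc0 : Kc 0. Proof. by rewrite -(scale0r (cm a b)); apply: KcZ; apply: Kcab. Qed.
Lemma KcN x : Kc x -> Kc (- x). Proof. by move=> h; rewrite -scaleN1r; apply: KcZ. Qed.

Lemma S_idealS : idealS S.
Proof.
split.
- exact: SD.
- exact: SZ.
- by move=> x hx; split; apply: SM => //; [exact: Sa|exact: Sb|exact: Sa|exact: Sb].
Qed.
Lemma Kc_S x : Kc x -> S x.
Proof.
move=> h; apply: (h S); first exact: S_idealS.
by apply: SB; apply: SM; [exact: Sa|exact: Sb|exact: Sb|exact: Sa].
Qed.

Lemma Kc_mull s x : S s -> Kc x -> Kc (s * x).
Proof.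
move=> hs; move: x; apply: (hs (fun s => forall x, Kc x -> Kc (s * x))).
- split.
  + by move=> x; rewrite mul1r.
  + by move=> u v hu hv x hx; rewrite mulrDl; apply: KcD; [apply: hu|apply: hv].
  + by move=> u v hu hv x hx; rewrite -mulrA; apply: hu; apply: hv.
  + by move=> t u hu x hx; rewrite -scalerAl; apply: KcZ; apply: hu.
- move=> g [] -> x hx; case: Kc_ideal => _ _ /(_ x hx); case=> //.
Qed.
Lemma Kc_mulr s x : S s -> Kc x -> Kc (x * s).
Proof.
move=> hs; move: x; apply: (hs (fun s => forall x, Kc x -> Kc (x * s))).
- split.
  + by move=> x; rewrite mulr1.
  + by move=> u v hu hv x hx; rewrite mulrDr; apply: KcD; [apply: hu|apply: hv].
  + by move=> u v hu hv x hx; rewrite mulrA; apply: hv; apply: hu.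
  + by move=> t u hu x hx; rewrite -scalerAr; apply: KcZ; apply: hu.
- move=> g [] -> x hx; case: Kc_ideal => _ _ /(_ x hx); case=> //.
Qed.

Lemma Kc_cm s : S s -> Kc (cm s a) /\ Kc (cm s b).
Proof.
move=> hs.
suff : S s /\ Kc (cm s a) /\ Kc (cm s b) by case.
apply: (hs (fun s => S s /\ Kc (cm s a) /\ Kc (cm s b))).
- split.
  + by split; [exact: S1| rewrite /cm !mul1r !mulr1 !subrr; split; exact: Kc0].
  + move=> u v [hu [hu1 hu2]] [hv [hv1 hv2]]; split; first exact: SD.
    by rewrite !cmDl; split; apply: KcD.
  + move=> u v [hu [hu1 hu2]] [hv [hv1 hv2]]; split; first exact: SM.
    by rewrite !cmMl; split; apply: KcD; [apply: Kc_mull|apply: Kc_mulr|apply: Kc_mull|apply: Kc_mulr].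
  + move=> t u [hu [hu1 hu2]]; split; first exact: SZ.
    by rewrite !cmZl; split; apply: KcZ.
- move=> g [] ->.
  + by split; [exact: Sa| rewrite cmxx; split; [exact: Kc0|exact: Kcab]].
  + split; [exact: Sb| rewrite cmxx; split; [|exact: Kc0]].
    by rewrite cmC; apply: KcN; exact: Kcab.
Qed.

Lemma Kc_gam x : Kc x -> Kc (gam * x).
Proof.
move=> hx; apply: (hx (fun x => Kc (gam * x))).
- split.
  + by move=> u v hu hv; rewrite mulrDr; apply: KcD.
  + by move=> s u hu; rewrite -scalerAr; apply: KcZ.
  + move=> u hu; split.
    * by rewrite mulrA gam_central -mulrA; apply: Kc_mull => //; exact: Sa.
    * by rewrite mulrA gam_central -mulrA; apply: Kc_mull => //; exact: Sb.
    * by rewrite mulrA; apply: Kc_mulr => //; exact: Sa.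
    * by rewrite mulrA; apply: Kc_mulr => //; exact: Sb.
- by rewrite key2; apply: KcZ; case: (Kc_cm Sz0).
Qed.


Lemma gamX_central n : central (gam ^+ n).
Proof.
elim: n => [|n IH] y; first by rewrite expr0 mul1r mulr1.
by rewrite exprS -mulrA IH mulrA gam_central -mulrA.
Qed.

Definition I0 x := forall n, Kc (gam ^+ n * x).
Lemma Kc_I0 x : Kc x -> I0 x.
Proof.
move=> hx n; elim: n => [|n IH]; first by rewrite expr0 mul1r.
by rewrite exprS -mulrA; apply: Kc_gam.
Qed.
Lemma I0_S x : I0 x -> S x.
Proof. by move=> /(_ 0%N); rewrite expr0 mul1r; apply: Kc_S. Qed.
Lemma I0D x y : I0 x -> I0 y -> I0 (x + y).
Proof. by move=> hx hy n; rewrite mulrDr; apply: KcD. Qed.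
Lemma I0Z s x : I0 x -> I0 (s *: x).
Proof. by move=> hx n; rewrite -scalerAr; apply: KcZ. Qed.
Lemma I0N x : I0 x -> I0 (- x).
Proof. by move=> h; rewrite -scaleN1r; apply: I0Z. Qed.
Lemma I0B x y : I0 x -> I0 y -> I0 (x - y).
Proof. by move=> hx hy; apply: I0D => //; apply: I0N. Qed.
Lemma I0_0 : I0 0.
Proof. by move=> n; rewrite mulr0; apply: Kc0. Qed.

Lemma I0_mulS_l s x : S s -> I0 x -> I0 (s * x).
Proof. by move=> hs hx n; rewrite mulrA gamX_central -mulrA; apply: Kc_mull. Qed.
Lemma I0_mulS_r s x : S s -> I0 x -> I0 (x * s).
Proof. by move=> hs hx n; rewrite mulrA; apply: Kc_mulr. Qed.
Lemma I0_gam_l x : I0 x -> I0 (gam * x).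
Proof. by move=> hx n; rewrite mulrA -exprSr; apply: hx. Qed.
Lemma I0_gam_r x : I0 x -> I0 (x * gam).
Proof. by move=> hx; rewrite -gam_central; apply: I0_gam_l. Qed.

Lemma I0_mull u x : I0 x -> I0 (u * x).
Proof.
move: x; apply: (@hgen u (fun u => forall x, I0 x -> I0 (u * x))).
- split.
  + by move=> x; rewrite mul1r.
  + by move=> s t hs ht x hx; rewrite mulrDl; apply: I0D; [apply: hs|apply: ht].
  + by move=> s t hs ht x hx; rewrite -mulrA; apply: hs; apply: ht.
  + by move=> r t ht x hx; rewrite -scalerAl; apply: I0Z; apply: ht.
- move=> g [|[]] -> x hx.
  + by apply: I0_mulS_l => //; exact: Sa.
  + by apply: I0_mulS_l => //; exact: Sb.
  + rewrite c_eq mulrDl; apply: I0D; first exact: I0_gam_l.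
    by apply: I0_mulS_l => //; exact: Sw.
Qed.
Lemma I0_mulr u x : I0 x -> I0 (x * u).
Proof.
move: x; apply: (@hgen u (fun u => forall x, I0 x -> I0 (x * u))).
- split.
  + by move=> x; rewrite mulr1.
  + by move=> s t hs ht x hx; rewrite mulrDr; apply: I0D; [apply: hs|apply: ht].
  + by move=> s t hs ht x hx; rewrite mulrA; apply: ht; apply: hs.
  + by move=> r t ht x hx; rewrite -scalerAr; apply: I0Z; apply: ht.
- move=> g [|[]] -> x hx.
  + by apply: I0_mulS_r => //; exact: Sa.
  + by apply: I0_mulS_r => //; exact: Sb.
  + rewrite c_eq mulrDr; apply: I0D; first exact: I0_gam_r.
    by apply: I0_mulS_r => //; exact: Sw.
Qed.

Lemma cm_cl y : cm c y = cm w y.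
Proof. by rewrite c_eq cmDl /cm gam_central subrr add0r. Qed.

Lemma I0_cm_gens g g' : (g = a \/ g = b \/ g = c) -> (g' = a \/ g' = b \/ g' = c) ->
  I0 (cm g g').
Proof.
have ab : I0 (cm a b) by apply: Kc_I0; exact: Kcab.
have ba : I0 (cm b a) by rewrite cmC; apply: I0N.
have [wa wb] := Kc_cm Sw.
have ca : I0 (cm c a) by rewrite cm_cl; apply: Kc_I0.
have cb : I0 (cm c b) by rewrite cm_cl; apply: Kc_I0.
have ac : I0 (cm a c) by rewrite cmC; apply: I0N.
have bc : I0 (cm b c) by rewrite cmC; apply: I0N.
have xx : forall x, I0 (cm x x) by move=> x; rewrite cmxx; exact: I0_0.
by case=> [|[]] -> [|[]] ->.
Qed.

Lemma I0_cm_gen g y : (g = a \/ g = b \/ g = c) -> I0 (cm g y).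
Proof.
move=> hg; apply: (@hgen y (fun y => I0 (cm g y))).
- split.
  + by rewrite /cm mul1r mulr1 subrr; exact: I0_0.
  + by move=> s t hs ht; rewrite cmC cmDl opprD -!cmC; apply: I0D.
  + by move=> s t hs ht; rewrite cmMr; apply: I0D; [apply: I0_mulr|apply: I0_mull].
  + by move=> r t ht; rewrite cmC cmZl -scalerN -cmC; apply: I0Z.
- by move=> g' hg'; apply: I0_cm_gens.
Qed.

Lemma I0_cm x y : I0 (cm x y).
Proof.
apply: (@hgen x (fun x => I0 (cm x y))).
- split.
  + by rewrite /cm mul1r mulr1 subrr; exact: I0_0.
  + by move=> s t hs ht; rewrite cmDl; apply: I0D.
  + by move=> s t hs ht; rewrite cmMl; apply: I0D; [apply: I0_mull|apply: I0_mulr].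
  + by move=> r t ht; rewrite cmZl; apply: I0Z.
- by move=> g hg; apply: I0_cm_gen.
Qed.


Definition I0p : {pred D} := fun x => pb (I0 x).
Lemma I0p_closed : GRing.zmod_closed I0p.
Proof.
split; first by apply/pbP; exact: I0_0.
by move=> x y /pbP hx /pbP hy; apply/pbP; apply: I0B.
Qed.
HB.instance Definition _ := GRing.isZmodClosed.Build D I0p I0p_closed.

Definition Q := Quotient.quot I0p.
HB.instance Definition _ := GRing.Zmodule.on Q.
Definition piQ (x : D) : Q := \pi_Q x.

Lemma piQ_eq x y : piQ x = piQ y <-> I0 (x - y).
Proof.
rewrite /piQ; split.
- by move/eqP; rewrite -Quotient.idealrBE => /pbP.
- by move=> h; apply/eqP; rewrite -Quotient.idealrBE; apply/pbP.
Qed.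
Lemma piQD x y : piQ (x + y) = piQ x + piQ y.
Proof. exact: Quotient.pi_add. Qed.
Lemma piQ0 : piQ 0 = 0.
Proof. by rewrite /piQ piE. Qed.

Lemma piQK (x : Q) : piQ (repr x) = x.
Proof. exact: reprK. Qed.

Definition mulQ (x y : Q) : Q := piQ (repr x * repr y).
Definition oneQ : Q := piQ 1.

Lemma piQM x y : piQ (x * y) = mulQ (piQ x) (piQ y).
Proof.
rewrite /mulQ; apply/piQ_eq.
set x' := repr (piQ x); set y' := repr (piQ y).
have hx : I0 (x - x') by apply/piQ_eq; rewrite /x' piQK.
have hy : I0 (y - y') by apply/piQ_eq; rewrite /y' piQK.
have -> : x * y - x' * y' = (x - x') * y + x' * (y - y').
  by rewrite mulrBl mulrBr addrA subrK.
by apply: I0D; [apply: I0_mulr|apply: I0_mull].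
Qed.

Lemma mulQA : associative mulQ.
Proof. by move=> x y z; rewrite -[x]piQK -[y]piQK -[z]piQK -!piQM mulrA. Qed.
Lemma mulQC : commutative mulQ.
Proof.
move=> x y; rewrite -[x]piQK -[y]piQK -!piQM; apply/piQ_eq.
exact: I0_cm.
Qed.
Lemma mul1Q : left_id oneQ mulQ.
Proof. by move=> x; rewrite -[x]piQK /oneQ -piQM mul1r. Qed.
Lemma mulQ_addl : left_distributive mulQ +%R.
Proof.
by move=> x y z; rewrite -[x]piQK -[y]piQK -[z]piQK -piQD -!piQM -piQD mulrDl.
Qed.

Variables (pi : D -> {mpoly F[3]}) (hpi : alg_hom pi).
Variables (i j l : 'I_3).
Hypotheses (hij : i != j) (hil : i != l) (hjl : j != l).
Hypotheses (pia : pi a = 'X_i) (pib : pi b = 'X_j) (pic : pi c = 'X_l).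

Lemma Kc_pi x : Kc x -> pi x = 0.
Proof.
have [p1 p2 p3 p4] := hpi.
move=> hx; apply: (hx (fun x => pi x = 0)).
- split.
  + by move=> u v hu hv; rewrite p1 hu hv addr0.
  + by move=> s u hu; rewrite p2 hu scaler0.
  + by move=> u hu; rewrite !p3 hu !mulr0 !mul0r.
- by rewrite /cm p1 (hom_opp hpi) !p3 pia pib mulrC subrr.
Qed.

Lemma nonzero1Q : oneQ != 0.
Proof.
apply/eqP; rewrite /oneQ -piQ0 => /piQ_eq; rewrite subr0 => /(_ 0%N).
rewrite expr0 mulr1 => /Kc_pi; case: hpi => _ _ _ ->.
by move/eqP; rewrite oner_eq0.
Qed.

HB.instance Definition _ := GRing.Zmodule_isComNzRing.Build Q
  mulQA mulQC mul1Q mulQ_addl nonzero1Q.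


Lemma piQN x : piQ (- x) = - piQ x.
Proof. exact: Quotient.pi_opp. Qed.
Lemma piQB x y : piQ (x - y) = piQ x - piQ y.
Proof. by rewrite piQD piQN. Qed.
Lemma piQ1 : piQ 1 = 1.
Proof. by []. Qed.
Lemma piQM' x y : piQ (x * y) = piQ x * piQ y.
Proof. exact: piQM. Qed.

Definition fQ (s : F) : Q := piQ (s%:A).
Lemma fQ_zmod : zmod_morphism fQ.
Proof. by move=> x y; rewrite /fQ scalerBl piQB. Qed.
Lemma fQ_mul : monoid_morphism fQ.
Proof.
split; first by rewrite /fQ scale1r.
by move=> x y; rewrite /fQ -piQM' mulr_algl scalerA.
Qed.
HB.instance Definition _ := GRing.isZmodMorphism.Build F Q fQ fQ_zmod.
HB.instance Definition _ := GRing.isMonoidMorphism.Build F Q fQ fQ_mul.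

Definition hQ (t : 'I_3) : Q := piQ (if t == i then a else if t == j then b else c).
Definition ev (p : {mpoly F[3]}) : Q := mmap fQ hQ p.

Lemma evD p p' : ev (p + p') = ev p + ev p'. Proof. exact: rmorphD. Qed.
Lemma evM p p' : ev (p * p') = ev p * ev p'. Proof. exact: rmorphM. Qed.
Lemma ev1 : ev 1 = 1. Proof. exact: rmorph1. Qed.
Lemma evZ s p : ev (s *: p) = fQ s * ev p. Proof. exact: mmapZ. Qed.
Lemma evX t : ev 'X_t = hQ t.
Proof. by rewrite /ev mmapX mmap1U. Qed.

Lemma ev_pi x : ev (pi x) = piQ x.
Proof.
have [p1 p2 p3 p4] := hpi.
apply: (@hgen x (fun x => ev (pi x) = piQ x)).
- split.
  + by rewrite p4 ev1.
  + by move=> u v hu hv; rewrite p1 evD hu hv piQD.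
  + by move=> u v hu hv; rewrite p3 evM hu hv piQM'.
  + by move=> s u hu; rewrite p2 evZ hu /fQ -piQM' mulr_algl.
- move=> g [|[]] ->.
  + by rewrite pia evX /hQ eqxx.
  + by rewrite pib evX /hQ eq_sym (negbTE hij) eqxx.
  + by rewrite pic evX /hQ eq_sym (negbTE hil) eq_sym (negbTE hjl).
Qed.

Lemma poly_side p : gen_subalg (fun p : {mpoly F[3]} => p = 'X_i \/ p = 'X_j) p ->
  exists z, S z /\ ev p = piQ z.
Proof.
move=> hp; apply: (hp (fun p => exists z, S z /\ ev p = piQ z)).
- split.
  + by exists 1; split; [exact: S1| rewrite ev1].
  + move=> u v [zu [hzu eu]] [zv [hzv ev']]; exists (zu + zv); split; first exact: SD.
    by rewrite evD eu ev' piQD.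
  + move=> u v [zu [hzu eu]] [zv [hzv ev']]; exists (zu * zv); split; first exact: SM.
    by rewrite evM eu ev' piQM'.
  + move=> s u [zu [hzu eu]]; exists (s *: zu); split; first exact: SZ.
    by rewrite evZ eu /fQ -piQM' mulr_algl.
- move=> g [] ->.
  + by exists a; split; [exact: Sa | rewrite evX /hQ eqxx].
  + by exists b; split; [exact: Sb | rewrite evX /hQ eq_sym (negbTE hij) eqxx].
Qed.

Lemma main_gen x : S x <-> gen_subalg (fun p : {mpoly F[3]} => p = 'X_i \/ p = 'X_j) (pi x).
Proof.
split.
- apply: hom_gen => // s [] ->; apply: gen_base; [left; exact: pia | right; exact: pib].
- move=> /poly_side [z [hz e]].
  rewrite ev_pi in e; move/piQ_eq: e => /I0_S hxz.
  by rewrite -(subrK z x); apply: SD.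
Qed.

End Main.

Lemma gen_swap (F : fieldType) (R : algType F) (u v : R) x :
  gen_subalg (fun y => y = u \/ y = v) x <-> gen_subalg (fun y => y = v \/ y = u) x.
Proof. by split; apply: gen_mono => s; rewrite or_comm. Qed.

Local Close Scope quotient_scope.
Unset Implicit Arguments.

Theorem proposition11p14 (F : fieldType) (q : F) (hq0 : q != 0)
  (hq4 : q ^+ 4 != 1) (D : algType F) (A B C : D)
  (hD : is_universal_AW q A B C)
  (pi : D -> {mpoly F[3]}) (hpi : alg_hom pi)
  (hA : pi A = 'X_(0 : 'I_3)) (hB : pi B = 'X_(1 : 'I_3))
  (hC : pi C = 'X_(2 : 'I_3)) :
  [/\ forall x : D,
        gen_subalg (fun y => y = A \/ y = B) x <->
        gen_subalg (fun p : {mpoly F[3]} => p = 'X_(0 : 'I_3) \/ p = 'X_(1 : 'I_3)) (pi x),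
      forall x : D,
        gen_subalg (fun y => y = B \/ y = C) x <->
        gen_subalg (fun p : {mpoly F[3]} => p = 'X_(1 : 'I_3) \/ p = 'X_(2 : 'I_3)) (pi x) &
      forall x : D,
        gen_subalg (fun y => y = A \/ y = C) x <->
        gen_subalg (fun p : {mpoly F[3]} => p = 'X_(0 : 'I_3) \/ p = 'X_(2 : 'I_3)) (pi x)].
Proof.
have q2 : q ^+ 2 != 0 by rewrite expf_neq0.
have hk0 : q ^+ 2 - q ^- 2 != 0.
  apply: contra hq4; rewrite subr_eq0 => /eqP e.
  by rewrite (_ : 4 = 2 + 2)%N // exprD {2}e mulfV.
have hq1 : q - q^-1 != 0.
  apply: contra hq4; rewrite subr_eq0 => /eqP e.
  have e2 : q ^+ 2 = 1 by rewrite expr2 {2}e mulfV.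
  by rewrite (_ : 4 = 2 * 2)%N // exprM e2 expr1n.
have hgen := universal_gen hD.
case: (hD) => rel _.
have [r1 r2 r3] := rel.
have rel2 : AW_rel q B C A by split.
have rel3 : AW_rel q C A B by split.
split.
- move=> x; apply: (main_gen hq1 hk0 rel hgen hpi _ _ _ hA hB hC); reflexivity.
- move=> x; apply: (main_gen hq1 hk0 rel2 _ hpi _ _ _ hB hC hA); try reflexivity.
  by move=> y; apply: gen_mono (hgen y) => s; tauto.
- move=> x; rewrite gen_swap [X in _ <-> X]gen_swap.
  apply: (main_gen hq1 hk0 rel3 _ hpi _ _ _ hC hA hB); try reflexivity.
  by move=> z; apply: gen_mono (hgen z) => s; tauto.
Qed.
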